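(* Let $I$ be an infinite set, $\mathcal U\subseteq P(I)$ a non-principal ultrafilter, and $\mathbb X_i=\langle X_i,\rho_i\rangle$ ($i\in I$) $L$-structures. (a) If $\{i\in I:\mathbb X_i\models\varphi^{\rm conn}_n\}\in\mathcal U$ for some $n\in\omega$, then the ultraproduct $\prod_{\mathcal U}\mathbb X_i$ is connected; if moreover $|I|$ is smaller than the first measurable cardinal, the converse also holds. (b) For an $L$-structure $\mathbb X$: if $\mathbb X$ is of finite diameter then the ultrapower $\prod_{\mathcal U}\mathbb X$ is connected; if moreover $|I|$ is smaller than the first measurable cardinal, the converse also holds.
   Context: $L$ is a language with one binary relation symbol; an $L$-structure is $\mathbb X=\langle X,\rho\rangle$, $X\neq\emptyset$, $\rho\subseteq X^2$. Connectivity is defined via the reflexivization $\rho_R=\rho\cup\{(x,x):x\in X\}$: write $\rho_R^0=\rho_R$, $\rho_R^1=\rho_R^{-1}$; a path of length $n+1$ from $x$ to $y$ is $\langle\bar z,\epsilon\rangle$ with $\bar z\in X^n$, $\epsilon\in\{0,1\}^{n+1}$, and $x\,\rho_R^{\epsilon_0}\,z_0\,\rho_R^{\epsilon_1}\cdots z_{n-1}\,\rho_R^{\epsilon_n}\,y$. $\mathbb X$ is connected iff any two points are joined by a path of some finite length. $\mathbb X\models\varphi^{\rm conn}_n$ means any two points are joined by a path of length $n+1$; $\mathbb X$ is of finite diameter iff this holds for some $n$. The ultraproduct $\prod_{\mathcal U}\mathbb X_i$ has universe $(\prod_i X_i)/\!\sim_{\mathcal U}$, where $x\sim_{\mathcal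 U}y$ iff $\{i:x_i=y_i\}\in\mathcal U$, and relation $[x]\,\rho\,[y]$ iff $\{i:x_i\,\rho_i\,y_i\}\in\mathcal U$; the ultrapower is the case $\mathbb X_i=\mathbb X$ for all $i$. ''Smaller than the first measurable cardinal'': below the least measurable cardinal if one exists, arbitrary otherwise. *)

(* Defs.v *)
From Stdlib Require Import List.

Definition ultrafilter {I : Type} (U : (I -> Prop) -> Prop) : Prop :=
  U (fun _ => True) /\
  ~ U (fun _ => False) /\
  (forall A B : I -> Prop, U A -> (forall i, A i -> B i) -> U B) /\
  (forall A B : I -> Prop, U A -> U B -> U (fun i => A i /\ B i)) /\
  (forall A : I -> Prop, U A \/ U (fun i => ~ A i)).

Definition nonprincipal {I : Type} (U : (I -> Prop) -> Prop) : Prop :=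
  ~ exists i0 : I, U (fun i => i = i0).

Definition infinite_type (I : Type) : Prop :=
  ~ exists l : list I, forall i : I, In i l.

Definition reflR {X : Type} (rho : X -> X -> Prop) (x y : X) : Prop :=
  rho x y \/ x = y.

Definition step {X : Type} (rho : X -> X -> Prop) (x y : X) : Prop :=
  reflR rho x y \/ reflR rho y x.

(* path_of_len rho n x y : there is a path of length n+1 from x to y, i.e.
   z_0..z_{n-1} and eps_0..eps_n with x rho_R^{eps_0} z_0 ... z_{n-1} rho_R^{eps_n} y *)
Fixpoint path_of_len {X : Type} (rho : X -> X -> Prop) (n : nat) (x y : X) : Prop :=
  match n with
  | O => step rho x y
  | S m => exists z : X, step rho x z /\ path_of_len rho m z y
  end.

Definition phi_conn {X : Type} (rho : X -> X -> Prop) (n : nat) : Prop :=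
  forall x y : X, path_of_len rho n x y.

Definition connected {X : Type} (rho : X -> X -> Prop) : Prop :=
  forall x y : X, exists n : nat, path_of_len rho n x y.

Definition finite_diameter {X : Type} (rho : X -> X -> Prop) : Prop :=
  exists n : nat, phi_conn rho n.

Definition ueq {I : Type} (U : (I -> Prop) -> Prop) {X : I -> Type}
  (f g : forall i, X i) : Prop := U (fun i => f i = g i).

(* universe: the quotient (prod_i X_i)/~_U, as the set of ~_U-classes *)
Definition uprod {I : Type} (U : (I -> Prop) -> Prop) (X : I -> Type) : Type :=
  { P : (forall i, X i) -> Prop | exists f : forall i, X i, P = ueq U f }.

Definition urel {I : Type} (U : (I -> Prop) -> Prop) {X : I -> Type}
  (rho : forall i, X i -> X i -> Prop) (a b : uprod U X) : Prop :=
  exists (f g : forall i, X i),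
    proj1_sig a = ueq U f /\ proj1_sig b = ueq U g /\
    U (fun i => rho i (f i) (g i)).

Definition upow {I : Type} (U : (I -> Prop) -> Prop) (Y : Type) : Type :=
  uprod U (fun _ : I => Y).
Definition upowrel {I : Type} (U : (I -> Prop) -> Prop) {Y : Type}
  (sigma : Y -> Y -> Prop) : upow U Y -> upow U Y -> Prop :=
  urel U (X := fun _ : I => Y) (fun _ => sigma).

Definition injective_fun {A B : Type} (f : A -> B) : Prop :=
  forall a1 a2, f a1 = f a2 -> a1 = a2.

Definition card_lt (J K : Type) : Prop :=
  (exists f : J -> K, injective_fun f) /\ ~ (exists g : K -> J, injective_fun g).

Definition complete_below (K : Type) (U : (K -> Prop) -> Prop) : Prop :=
  forall (J : Type) (A : J -> K -> Prop),
    card_lt J K -> (forall j, U (A j)) -> U (fun k => forall j, A j k).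

Definition measurable_card (K : Type) : Prop :=
  (~ exists f : K -> nat, injective_fun f) /\
  exists U : (K -> Prop) -> Prop, ultrafilter U /\ nonprincipal U /\ complete_below K U.

(* |I| is smaller than the first measurable cardinal (vacuous if none exists) *)
Definition below_first_measurable (I : Type) : Prop :=
  forall K : Type, measurable_card K -> card_lt I K.

(* Main.v *)
Require Import Defs.
From Stdlib Require Import ClassicalEpsilon Classical FunctionalExtensionality
  PropExtensionality ProofIrrelevance Wellfounded Arith Lia.
From mathcomp Require ssreflect ssrfun ssrbool eqtype boolp wochoice.

Module WO.
Import ssreflect ssrfun ssrbool eqtype boolp wochoice.
Lemma wo_exists (T : Type) : exists R : T -> T -> Prop,
  (forall A : T -> Prop, (exists x, A x) -> exists z, A z /\ forall a, A a -> R z a) /\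
  (forall x y, R x y -> R y x -> x = y).
Proof.
case: (well_ordering_principle {classic T}) => R HR.
have Hmin : forall A : T -> Prop, (exists x, A x) -> exists z, A z /\ forall a, A a -> R z a.
  move=> A [x Ax].
  have ne : nonempty (fun y : {classic T} => `[< A y >]).
    by exists x; rewrite unfold_in; apply/asboolP.
  case: (HR _ ne) => z [[Hz Hlb] _].
  exists z; split; first by move: Hz; rewrite unfold_in => /asboolP.
  by move=> a Aa; apply: Hlb; rewrite unfold_in; apply/asboolP.
exists (fun x y => R x y); split; first exact: Hmin.
have Hrefl : forall x, R x x.
  move=> x; case: (Hmin (fun z => z = x)); first by exists x.
  by move=> z [-> H]; apply: H.
move=> x y Rxy Ryx.
have ne : nonempty (fun z : {classic T} => `[< z = x \/ z = y >]).
  by exists x; rewrite unfold_in; apply/asboolP; left.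
case: (HR _ ne) => z [_ Hu].
have Hx : minimum_of R (fun z : {classic T} => `[< z = x \/ z = y >]) x.
  split; first by rewrite unfold_in; apply/asboolP; left.
  by move=> a; rewrite unfold_in => /asboolP [->|->].
have Hy : minimum_of R (fun z : {classic T} => `[< z = x \/ z = y >]) y.
  split; first by rewrite unfold_in; apply/asboolP; right.
  by move=> a; rewrite unfold_in => /asboolP [->|->].
by rewrite -(Hu _ Hx) -(Hu _ Hy).
Qed.
End WO.

Section UFB.
End UFB.

Lemma uf_mono {I} (U : (I -> Prop) -> Prop) (A B : I -> Prop) :
  ultrafilter U -> U A -> (forall i, A i -> B i) -> U B.
Proof. intros (_ & _ & Hm & _). eauto. Qed.

Lemma uf_and {I} (U : (I -> Prop) -> Prop) (A B : I -> Prop) :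
  ultrafilter U -> U A -> U B -> U (fun i => A i /\ B i).
Proof. intros (_ & _ & _ & Ha & _). eauto. Qed.

Lemma uf_true {I} (U : (I -> Prop) -> Prop) (A : I -> Prop) :
  ultrafilter U -> (forall i, A i) -> U A.
Proof. intros HU H. apply (uf_mono U (fun _ => True)); auto. apply HU. Qed.

Lemma uf_empty {I} (U : (I -> Prop) -> Prop) (A : I -> Prop) :
  ultrafilter U -> (forall i, ~ A i) -> ~ U A.
Proof.
  intros HU H HA. pose proof HU as (_ & Hf & _). apply Hf.
  apply (uf_mono U A); [assumption|assumption|].
  intros i Hi; apply (H i Hi).
Qed.

Lemma uf_not {I} (U : (I -> Prop) -> Prop) (A : I -> Prop) :
  ultrafilter U -> U A -> ~ U (fun i => ~ A i).
Proof.
  intros HU H1 H2. apply (uf_empty U (fun i => A i /\ ~ A i) HU).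
  - intros i [a b]; auto.
  - apply uf_and; auto.
Qed.

Lemma uf_compl {I} (U : (I -> Prop) -> Prop) (A : I -> Prop) :
  ultrafilter U -> ~ U A -> U (fun i => ~ A i).
Proof. intros HU H. destruct HU as (_ & _ & _ & _ & He). destruct (He A); tauto. Qed.

Lemma uf_or {I} (U : (I -> Prop) -> Prop) (A B : I -> Prop) :
  ultrafilter U -> U (fun i => A i \/ B i) -> U A \/ U B.
Proof.
  intros HU H. destruct (classic (U A)) as [|HnA]; [left; auto|right].
  apply (uf_mono U (fun i => (A i \/ B i) /\ ~ A i)); auto.
  - apply uf_and; auto. apply uf_compl; auto.
  - intros i [[a|b] c]; tauto.
Qed.

Lemma sig_ext {A : Type} (P : A -> Prop) (a b : sig P) :
  proj1_sig a = proj1_sig b -> a = b.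
Proof.
  destruct a as [a pa], b as [b pb]; simpl; intro E; subst.
  f_equal; apply proof_irrelevance.
Qed.

Definition cls {I} (U : (I -> Prop) -> Prop) {X : I -> Type} (f : forall i, X i)
  : uprod U X := exist _ (ueq U f) (ex_intro _ f eq_refl).

Lemma cls_surj {I} (U : (I -> Prop) -> Prop) {X : I -> Type} (a : uprod U X) :
  exists f, a = cls U f.
Proof.
  destruct a as [P [f Hf]]. exists f. apply sig_ext. simpl. exact Hf.
Qed.

Lemma ueq_refl {I} (U : (I -> Prop) -> Prop) {X : I -> Type} (f : forall i, X i) :
  ultrafilter U -> ueq U f f.
Proof. intros HU. unfold ueq. apply uf_true; auto. Qed.

Lemma cls_eq {I} (U : (I -> Prop) -> Prop) {X : I -> Type} (f g : forall i, X i) :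
  ultrafilter U -> U (fun i => f i = g i) -> cls U f = cls U g.
Proof.
  intros HU H. apply sig_ext. simpl.
  apply functional_extensionality; intro h. apply propositional_extensionality.
  unfold ueq; split; intro H'.
  - apply (uf_mono U (fun i => f i = g i /\ f i = h i)); [auto|apply uf_and; auto|].
    intros i [a b]; congruence.
  - apply (uf_mono U (fun i => f i = g i /\ g i = h i)); [auto|apply uf_and; auto|].
    intros i [a b]; congruence.
Qed.

Lemma cls_eq_inv {I} (U : (I -> Prop) -> Prop) {X : I -> Type} (f g : forall i, X i) :
  ultrafilter U -> cls U f = cls U g -> U (fun i => f i = g i).
Proof.
  intros HU E. apply (f_equal (@proj1_sig _ _)) in E. simpl in E.
  change (ueq U f g). rewrite E. apply ueq_refl; auto.
Qed.

Lemma urel_cls {I} (U : (I -> Prop) -> Prop) {X : I -> Type}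
  (rho : forall i, X i -> X i -> Prop) (f g : forall i, X i) :
  ultrafilter U -> (urel U rho (cls U f) (cls U g) <-> U (fun i => rho i (f i) (g i))).
Proof.
  intros HU; split.
  - intros [f' [g' [E1 [E2 H]]]]. simpl in E1, E2.
    assert (H1 : ueq U f f') by (rewrite E1; apply ueq_refl; auto).
    assert (H2 : ueq U g g') by (rewrite E2; apply ueq_refl; auto).
    unfold ueq in H1, H2.
    apply (uf_mono U (fun i => f i = f' i /\ (g i = g' i /\ rho i (f' i) (g' i)))); auto.
    + apply uf_and; auto. apply uf_and; auto.
    + intros i [a [b c]]. rewrite a, b; auto.
  - intros H. exists f, g. repeat split; auto.
Qed.

Lemma step_fwd {I} (U : (I -> Prop) -> Prop) {X : I -> Type}
  (rho : forall i, X i -> X i -> Prop) (f g : forall i, X i) :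
  ultrafilter U -> U (fun i => step (rho i) (f i) (g i)) ->
  step (urel U rho) (cls U f) (cls U g).
Proof.
  intros HU H. unfold step, reflR in *.
  destruct (uf_or U _ _ HU H) as [H1|H1]; destruct (uf_or U _ _ HU H1) as [H2|H2].
  - left; left; apply urel_cls; auto.
  - left; right; apply cls_eq; auto.
  - right; left; apply urel_cls; auto.
  - right; right; apply cls_eq; auto.
Qed.

Lemma step_bwd {I} (U : (I -> Prop) -> Prop) {X : I -> Type}
  (rho : forall i, X i -> X i -> Prop) (f g : forall i, X i) :
  ultrafilter U -> step (urel U rho) (cls U f) (cls U g) ->
  U (fun i => step (rho i) (f i) (g i)).
Proof.
  intros HU H. unfold step, reflR in *.
  destruct H as [[H|H]|[H|H]].
  - apply urel_cls in H; auto. apply (uf_mono U _ _ HU H); auto.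
  - apply cls_eq_inv in H; auto. apply (uf_mono U _ _ HU H); auto.
  - apply urel_cls in H; auto. apply (uf_mono U _ _ HU H); auto.
  - apply cls_eq_inv in H; auto. apply (uf_mono U _ _ HU H); auto.
Qed.

Lemma path_fwd {I} (U : (I -> Prop) -> Prop) {X : I -> Type}
  (rho : forall i, X i -> X i -> Prop) (HX : forall i, inhabited (X i)) :
  ultrafilter U -> forall n (f g : forall i, X i),
  U (fun i => path_of_len (rho i) n (f i) (g i)) ->
  path_of_len (urel U rho) n (cls U f) (cls U g).
Proof.
  intros HU n. induction n as [|n IH]; intros f g H.
  - exact (step_fwd U rho f g HU H).
  - simpl in H.
    set (h := fun i => epsilon (HX i)
           (fun z => step (rho i) (f i) z /\ path_of_len (rho i) n z (g i))).
    assert (H' : U (fun i => step (rho i) (f i) (h i) /\ path_of_len (rho i) n (h i) (g i))).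
    { apply (uf_mono U _ _ HU H). intros i Hi.
      exact (epsilon_spec (HX i) _ Hi). }
    exists (cls U h). split.
    + apply (step_fwd U rho f h HU). apply (uf_mono U _ _ HU H'). tauto.
    + apply IH. apply (uf_mono U _ _ HU H'). tauto.
Qed.

Lemma path_bwd {I} (U : (I -> Prop) -> Prop) {X : I -> Type}
  (rho : forall i, X i -> X i -> Prop) :
  ultrafilter U -> forall n (f g : forall i, X i),
  path_of_len (urel U rho) n (cls U f) (cls U g) ->
  U (fun i => path_of_len (rho i) n (f i) (g i)).
Proof.
  intros HU n. induction n as [|n IH]; intros f g H.
  - exact (step_bwd U rho f g HU H).
  - destruct H as [z [Hs Hp]]. destruct (cls_surj U z) as [h ->].
    apply (step_bwd U rho f h HU) in Hs. apply IH in Hp.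
    apply (uf_mono U _ _ HU (uf_and U _ _ HU Hs Hp)).
    intros i Hi; simpl; exists (h i); exact Hi.
Qed.

Lemma fwd_conn {I} (U : (I -> Prop) -> Prop) (X : I -> Type)
  (rho : forall i, X i -> X i -> Prop) (HX : forall i, inhabited (X i)) :
  ultrafilter U -> (exists n : nat, U (fun i => phi_conn (rho i) n)) ->
  connected (urel U rho).
Proof.
  intros HU [n Hn] a b.
  destruct (cls_surj U a) as [f ->]; destruct (cls_surj U b) as [g ->].
  exists n. apply path_fwd; auto. apply (uf_mono U _ _ HU Hn). intros i Hi; apply Hi.
Qed.

Lemma path_S {X} (rho : X -> X -> Prop) n x y :
  path_of_len rho n x y -> path_of_len rho (S n) x y.
Proof. intros H. exists x. split; auto. left; right; reflexivity. Qed.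

Lemma path_up {X} (rho : X -> X -> Prop) n n' x y :
  n <= n' -> path_of_len rho n x y -> path_of_len rho n' x y.
Proof. intros Hle; induction Hle; auto using path_S. Qed.

Lemma maxnat (P : nat -> Prop) : (forall n, P (S n) -> P n) ->
  forall k, ~ P k -> ~ P 0 \/ exists n, P n /\ ~ P (S n).
Proof.
  intros Hd k; induction k as [|k IH]; intros Hk; [left; auto|].
  destruct (classic (P k)) as [H|H]; [right; exists k; auto|auto].
Qed.

Lemma conv_a {I} (U : (I -> Prop) -> Prop) (X : I -> Type)
  (rho : forall i, X i -> X i -> Prop) (HX : forall i, inhabited (X i))
  (HU : ultrafilter U) (C : nat -> I -> Prop)
  (Cnull : forall k, ~ U (C k)) (Ccov : forall i, exists k, C k i) :
  connected (urel U rho) -> exists n, U (fun i => phi_conn (rho i) n).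
Proof.
  intro Hc. apply NNPP; intro Hn.
  set (E := fun n i => ~ phi_conn (rho i) n /\ forall k, k <= n -> ~ C k i).
  assert (Efin : forall n, U (fun i => forall k, k <= n -> ~ C k i)).
  { induction n as [|n IH].
    - apply (uf_mono U _ _ HU (uf_compl U _ HU (Cnull 0))).
      intros i Hi k Hk. assert (k = 0) by lia. subst; auto.
    - apply (uf_mono U _ _ HU (uf_and U _ _ HU IH (uf_compl U _ HU (Cnull (S n))))).
      intros i [H1 H2] k Hk. destruct (Nat.eq_dec k (S n)); [subst; auto|].
      apply H1; lia. }
  assert (Ein : forall n, U (E n)).
  { intro n. apply uf_and; auto. apply uf_compl; auto.
    intro H; apply Hn; exists n; auto. }
  assert (Edec : forall n i, E (S n) i -> E n i).
  { intros n i [H1 H2]. split.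
    - intro H; apply H1; intros x y; apply path_S; auto.
    - intros k Hk; apply H2; lia. }
  assert (Edown : forall n n' i, n <= n' -> E n' i -> E n i).
  { intros n n' i Hle; induction Hle; auto. }
  assert (pair : forall i, exists p : X i * X i,
             forall n, E n i -> ~ path_of_len (rho i) n (fst p) (snd p)).
  { intro i. destruct (Ccov i) as [k Hk].
    assert (HkE : ~ E k i) by (intros [_ H]; apply (H k); auto).
    destruct (maxnat (fun n => E n i) (fun n => Edec n i) k HkE) as [H0|[n [H1 H2]]].
    - destruct (HX i) as [x]. exists (x, x). intros n Hn'.
      exfalso; apply H0. apply (Edown 0 n); auto; lia.
    - destruct H1 as [Hnc H1'].
      apply not_all_ex_not in Hnc; destruct Hnc as [x Hx].
      apply not_all_ex_not in Hx; destruct Hx as [y Hy].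
      exists (x, y). simpl. intros n' Hn' Hp.
      destruct (le_lt_dec n' n) as [Hle|Hlt].
      + apply Hy. apply (path_up _ n'); auto.
      + apply H2. apply (Edown (S n) n'); auto. }
  set (pf := fun i => proj1_sig (constructive_indefinite_description _ (pair i))).
  assert (Hpf : forall i n, E n i -> ~ path_of_len (rho i) n (fst (pf i)) (snd (pf i))).
  { intros i. exact (proj2_sig (constructive_indefinite_description _ (pair i))). }
  destruct (Hc (cls U (fun i => fst (pf i))) (cls U (fun i => snd (pf i)))) as [n Hp].
  apply path_bwd in Hp; auto.
  apply (uf_empty U _ HU (fun i H => Hpf i n (proj2 H) (proj1 H)) (uf_and U _ _ HU Hp (Ein n))).
Qed.

Definition wo_ok {W : Type} (R : W -> W -> Prop) : Prop :=
  (forall A : W -> Prop, (exists x, A x) -> exists z, A z /\ forall a, A a -> R z a) /\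
  (forall x y, R x y -> R y x -> x = y).

Definition ltw {W : Type} (R : W -> W -> Prop) (x y : W) : Prop := R x y /\ x <> y.

Lemma wo_total {W} (R : W -> W -> Prop) : wo_ok R -> forall x y, R x y \/ R y x.
Proof.
  intros [Hm _] x y. destruct (Hm (fun z => z = x \/ z = y)) as [z [[->| ->] Hz]].
  - exists x; auto.
  - left; apply Hz; auto.
  - right; apply Hz; auto.
Qed.

Lemma wo_wf {W} (R : W -> W -> Prop) : wo_ok R -> well_founded (ltw R).
Proof.
  intros [Hm Ha] a. apply NNPP; intro Hna.
  destruct (Hm (fun y => ~ Acc (ltw R) y)) as [z [Hz Hzm]]; [exists a; auto|].
  apply Hz; constructor. intros y [Ryz neq]. apply NNPP; intro Hy.
  apply neq; apply Ha; auto.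
Qed.

Lemma not_lt_le {W} (R : W -> W -> Prop) : wo_ok R -> forall x y, ~ ltw R x y -> R y x.
Proof.
  intros H x y Hn. destruct (wo_total R H x y) as [h|h]; auto.
  destruct (classic (x = y)) as [->|ne].
  - destruct (wo_total R H y y); auto.
  - exfalso; apply Hn; split; auto.
Qed.

Definition minof {W} (R : W -> W -> Prop) (A : W -> Prop) : option W :=
  match excluded_middle_informative (exists z, A z /\ forall a, A a -> R z a) with
  | left e => Some (proj1_sig (constructive_indefinite_description _ e))
  | right _ => None
  end.

Lemma minof_some {W} (R : W -> W -> Prop) (A : W -> Prop) z :
  minof R A = Some z -> A z /\ forall a, A a -> R z a.
Proof.
  unfold minof. destruct excluded_middle_informative as [e|e]; [|discriminate].
  intro E; injection E; intros <-.
  exact (proj2_sig (constructive_indefinite_description _ e)).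
Qed.

Lemma minof_ne {W} (R : W -> W -> Prop) (A : W -> Prop) :
  wo_ok R -> (exists x, A x) -> exists z, minof R A = Some z.
Proof.
  intros [Hm _] Hx. unfold minof. destruct excluded_middle_informative as [e|e].
  - eexists; reflexivity.
  - exfalso; apply e; auto.
Qed.

Definition coll {W} (R : W -> W -> Prop) (Hwf : well_founded (ltw R)) (m : W)
  (S : W -> Prop) : W -> option W :=
  Fix Hwf (fun _ => option W)
    (fun s h => minof R (fun y => ltw R y m /\
        forall s' (p : ltw R s' s), S s' -> h s' p <> Some y)).

Lemma coll_eq {W} (R : W -> W -> Prop) (Hwf : well_founded (ltw R)) m S s :
  coll R Hwf m S s = minof R (fun y => ltw R y m /\
        forall s', ltw R s' s -> S s' -> coll R Hwf m S s' <> Some y).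
Proof.
  unfold coll at 1. rewrite Fix_eq. { reflexivity. }
  intros x h h' E.
  assert (h = h') as ->; [|reflexivity].
  apply functional_extensionality_dep; intro y.
  apply functional_extensionality_dep; intro p. apply E.
Qed.

Lemma collapse {W} (R : W -> W -> Prop) (H : wo_ok R) (m : W) (S : W -> Prop)
  (HS : forall s, S s -> ltw R s m) :
  (exists g : {y | ltw R y m} -> {s | S s}, injective_fun g) \/
  (exists x, ltw R x m /\ exists g : {s | S s} -> {y | ltw R y x}, injective_fun g).
Proof.
  set (Hwf := wo_wf R H). set (f := coll R Hwf m S).
  assert (feq : forall s, f s = minof R (fun y => ltw R y m /\
        forall s', ltw R s' s -> S s' -> f s' <> Some y)) by (intro; apply coll_eq).
  destruct (classic (forall y, ltw R y m -> exists s, S s /\ f s = Some y)) as [Hall|Hn].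
  - left.
    exists (fun y => exist S (proj1_sig (constructive_indefinite_description _
                 (Hall (proj1_sig y) (proj2_sig y))))
              (proj1 (proj2_sig (constructive_indefinite_description _
                 (Hall (proj1_sig y) (proj2_sig y)))))).
    intros y1 y2 E. apply (f_equal (@proj1_sig _ _)) in E. simpl in E.
    destruct (constructive_indefinite_description _ (Hall (proj1_sig y1) (proj2_sig y1)))
      as [s1 [S1' E1]].
    destruct (constructive_indefinite_description _ (Hall (proj1_sig y2) (proj2_sig y2)))
      as [s2 [S2' E2]].
    simpl in E. subst. apply sig_ext. congruence.
  - right. apply not_all_ex_not in Hn. destruct Hn as [x Hx].
    apply imply_to_and in Hx. destruct Hx as [Hxm Hx].
    exists x; split; auto.
    assert (claim : forall s, S s -> exists y, f s = Some y /\ ltw R y x).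
    { intros s Ss.
      assert (Ax : ltw R x m /\ forall s', ltw R s' s -> S s' -> f s' <> Some x).
      { split; auto. intros s' _ Ss' E. apply Hx; eauto. }
      destruct (minof_ne R (fun y => ltw R y m /\
        forall s', ltw R s' s -> S s' -> f s' <> Some y) H (ex_intro _ x Ax)) as [y Hy].
      pose proof (minof_some R _ y Hy) as [_ Hmin].
      exists y. rewrite feq. split; auto. split; [apply Hmin; auto|].
      intro E; subst. apply Hx. exists s; split; auto. rewrite feq; auto. }
    exists (fun s => exist (fun y => ltw R y x)
              (proj1_sig (constructive_indefinite_description _
                 (claim (proj1_sig s) (proj2_sig s))))
              (proj2 (proj2_sig (constructive_indefinite_description _
                 (claim (proj1_sig s) (proj2_sig s)))))).
    intros s1 s2 E. apply (f_equal (@proj1_sig _ _)) in E. simpl in E.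
    destruct (constructive_indefinite_description _ (claim (proj1_sig s1) (proj2_sig s1)))
      as [y1 [E1 L1]].
    destruct (constructive_indefinite_description _ (claim (proj1_sig s2) (proj2_sig s2)))
      as [y2 [E2 L2]].
    simpl in E. subst y2.
    destruct s1 as [s1 S1], s2 as [s2 S2]. simpl in *. apply sig_ext. simpl.
    apply NNPP; intro ne.
    destruct (wo_total R H s1 s2) as [h|h].
    + pose proof E2 as E2'. rewrite feq in E2'. apply minof_some in E2'.
      destruct E2' as [[_ A2] _]. apply (A2 s1); auto. split; auto.
    + pose proof E1 as E1'. rewrite feq in E1'. apply minof_some in E1'.
      destruct E1' as [[_ A1] _]. apply (A1 s2); auto. split; auto.
Qed.

Definition hascover {I} (U : (I -> Prop) -> Prop) (J : Type) : Prop :=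
  exists A : J -> I -> Prop, (forall j, ~ U (A j)) /\ forall i, exists j, A j i.

Lemma cover_transfer {I} (U : (I -> Prop) -> Prop) (J J' : Type) (q : J -> J') :
  injective_fun q -> ultrafilter U -> hascover U J -> hascover U J'.
Proof.
  intros Hq HU [A [An Ac]].
  exists (fun k i => exists j, q j = k /\ A j i). split.
  - intros k Hk. destruct (classic (exists j, q j = k)) as [[j Hj]|Hn].
    + apply (An j). apply (uf_mono U _ _ HU Hk). intros i [j' [E Hi]].
      assert (j' = j) by (apply Hq; congruence). subst; auto.
    + apply (uf_empty U _ HU) in Hk; auto. intros i [j [E _]]; eauto.
  - intro i. destruct (Ac i) as [j Hj]. exists (q j), j; auto.
Qed.

Definition Rop {I} (R0 : I -> I -> Prop) (a b : option I) : Prop :=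
  match a, b with
  | Some x, Some y => R0 x y
  | _, None => True
  | None, Some _ => False
  end.

Lemma Rop_wo {I} (R0 : I -> I -> Prop) : wo_ok R0 -> wo_ok (Rop R0).
Proof.
  intros [Hm Ha]. split.
  - intros A [x Ax].
    destruct (classic (exists i, A (Some i))) as [Hs|Hn].
    + destruct (Hm _ Hs) as [z [Az Hz]]. exists (Some z); split; auto.
      intros [a|] Aa; simpl; auto.
    + exists None. destruct x as [x|]; [exfalso; eauto|]. split; auto.
      intros [a|] Aa; simpl; auto. apply Hn; eauto.
  - intros [x|] [y|]; simpl; intros; try tauto. f_equal; auto.
Qed.

Lemma count_incomplete {I} (U : (I -> Prop) -> Prop) (HU : ultrafilter U)
  (HnP : nonprincipal U) (i0 : I) (Hbm : below_first_measurable I) :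
  hascover U nat.
Proof.
  apply NNPP; intro H0.
  destruct (WO.wo_exists I) as [R0 HR0].
  pose proof (Rop_wo R0 HR0) as Hwo.
  set (R := Rop R0).
  set (P := fun y : option I => hascover U {z | ltw R z y}).
  assert (PN : P None).
  { exists (fun z i => proj1_sig z = Some i). split.
    - intros [v Hv] HUv; simpl in HUv. destruct v as [i1|].
      + apply HnP; exists i1. apply (uf_mono U _ _ HU HUv). intros i E; congruence.
      + apply (uf_empty U _ HU) in HUv; auto. intros i E; discriminate.
    - intro i. assert (Hl : ltw R (Some i) None) by (split; [exact Logic.I|discriminate]).
      exists (exist _ (Some i) Hl). reflexivity. }
  destruct (proj1 Hwo P (ex_intro _ None PN)) as [m [Pm mmin]].
  pose proof Pm as [A [Anull Acov]].
  set (K := {z | ltw R z m}).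
  set (h := fun i => proj1_sig (constructive_indefinite_description _ (Acov i))).
  assert (Hh : forall i, A (h i) i).
  { intro i. exact (proj2_sig (constructive_indefinite_description _ (Acov i))). }
  set (V := fun B : K -> Prop => U (fun i => B (h i))).
  assert (Hmeas : measurable_card K).
  { split.
    - intros [e He]. apply H0. apply (cover_transfer U K nat e He HU Pm).
    - exists V. split; [|split].
      + destruct HU as (Ht & Hf & Hmo & Ha & He). unfold V.
        split; [exact Ht|split; [exact Hf|split; [|split]]].
        * intros B1 B2 H1 H2. apply (Hmo _ _ H1). auto.
        * intros B1 B2 H1 H2. apply (Ha _ _ H1 H2).
        * intros B. apply He.
      + intros [j0 Hj0]. apply (Anull j0). apply (uf_mono U _ _ HU Hj0).
        intros i E. rewrite <- E. apply Hh.
      + intros J B HJ HB. apply NNPP; intro Hnot.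
        destruct (classic (exists j : J, True)) as [[j0 _]|HJe].
        2:{ apply Hnot. unfold V. apply uf_true; [exact HU|]. intros i j. exfalso; eauto. }
        set (D := fun j i => ~ B j (h i) \/ (j = j0 /\ forall j', B j' (h i))).
        assert (HD : hascover U J).
        { exists D. split.
          - intros j HDj. destruct (uf_or U _ _ HU HDj) as [H1|H2].
            + exact (uf_not U _ HU (HB j) H1).
            + apply Hnot. apply (uf_mono U _ _ HU H2). intros i [_ Hi]; exact Hi.
          - intro i. destruct (classic (forall j', B j' (h i))) as [Hall|Hn].
            + exists j0. right; auto.
            + apply not_all_ex_not in Hn. destruct Hn as [j Hj]. exists j; left; auto. }
        destruct HJ as [[e He] Hno].
        set (Sset := fun y => exists j, proj1_sig (e j) = y).
        assert (HS : forall s, Sset s -> ltw R s m).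
        { intros s [j <-]. exact (proj2_sig (e j)). }
        destruct (collapse R Hwo m Sset HS) as [[g Hg]|[x [Hxm [g Hg]]]].
        * apply Hno.
          exists (fun k => proj1_sig (constructive_indefinite_description _ (proj2_sig (g k)))).
          intros k1 k2 E.
          destruct (constructive_indefinite_description _ (proj2_sig (g k1))) as [j1 E1].
          destruct (constructive_indefinite_description _ (proj2_sig (g k2))) as [j2 E2].
          simpl in E. subst j2. apply Hg. apply sig_ext. congruence.
        * set (q := fun j => g (exist Sset (proj1_sig (e j)) (ex_intro _ j eq_refl))).
          assert (Hq : injective_fun q).
          { intros j1 j2 E. apply Hg in E. apply (f_equal (@proj1_sig _ _)) in E.
            simpl in E. apply He. apply sig_ext. exact E. }
          assert (Px : P x) by exact (cover_transfer U J _ q Hq HU HD).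
          pose proof (mmin x Px) as Hmx. destruct Hxm as [Hxm ne].
          apply ne. apply (proj2 Hwo); auto. }
  destruct (Hbm K Hmeas) as [_ Hno]. apply Hno.
  exists (fun k => match proj1_sig k with Some i => i | None => i0 end).
  intros [a1 p1] [a2 p2]; simpl; intro E. apply sig_ext; simpl.
  destruct a1 as [a1|], a2 as [a2|]; try congruence.
  all: exfalso; destruct p1 as [p1 ne1], p2 as [p2 ne2]; destruct m; simpl in *; auto.
Qed.

Theorem corollary2p6 (I : Type) (U : (I -> Prop) -> Prop)
  (HU : ultrafilter U) (HnP : nonprincipal U) (Hinf : infinite_type I)
  (X : I -> Type) (rho : forall i, X i -> X i -> Prop)
  (HX : forall i, inhabited (X i)) :
  (* (a) *)
  (((exists n : nat, U (fun i => phi_conn (rho i) n)) -> connected (urel U rho)) /\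
   (below_first_measurable I -> connected (urel U rho) ->
      exists n : nat, U (fun i => phi_conn (rho i) n))) /\
  (* (b) *)
  (forall (Y : Type) (sigma : Y -> Y -> Prop), inhabited Y ->
     (finite_diameter sigma -> connected (upowrel U (I := I) sigma)) /\
     (below_first_measurable I -> connected (upowrel U (I := I) sigma) ->
        finite_diameter sigma)).
Proof.
  assert (Hi0 : exists i0 : I, True).
  { apply NNPP; intro Hn. apply Hinf. exists nil. intro i. exfalso; eauto. }
  destruct Hi0 as [i0 _].
  split; [split|].
  - apply fwd_conn; auto.
  - intros Hbm Hc. destruct (count_incomplete U HU HnP i0 Hbm) as [C [Cn Cc]].
    exact (conv_a U X rho HX HU C Cn Cc Hc).
  - intros Y sigma HY. split.
    + intros [n Hn]. apply (fwd_conn U (fun _ => Y) (fun _ => sigma)); auto.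
      exists n. apply uf_true; auto.
    + intros Hbm Hc. destruct (count_incomplete U HU HnP i0 Hbm) as [C [Cn Cc]].
      destruct (conv_a U (fun _ => Y) (fun _ => sigma) (fun _ => HY) HU C Cn Cc Hc)
        as [n Hn].
      exists n. apply NNPP; intro Hno.
      apply (uf_empty U _ HU (fun i H => Hno H) Hn).
Qed.
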